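(* Let $(P,\mathcal{B})$ be a nontrivial pairwise balanced design with $n\ge 3$ points. Then \[\sum_{B\in\mathcal{B}}|B|\ \ge\ 3n-3,\] and equality holds if and only if $(P,\mathcal{B})$ is a near-pencil.
   Context: A pairwise balanced design (PBD) is a pair $(P,\mathcal{B})$ where $P$ is a finite set of points and $\mathcal{B}$ is a family of subsets of $P$ (blocks), each of size at least $2$, such that every two distinct points of $P$ lie in exactly one block. It is nontrivial if $P\notin\mathcal{B}$. A PBD on $n$ points is a near-pencil if it has one block of size $n-1$ and all other blocks have size $2$. *)

(* Defs.v *)
From mathcomp Require Import all_boot.
Set Implicit Arguments. Unset Strict Implicit. Unset Printing Implicit Defensive.

Definition is_PBD (T : finType) (B : {set {set T}}) : Prop :=
  (forall b, b \in B -> 2 <= #|b|) /\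
  (forall x y : T, x != y -> exists! b, b \in B /\ x \in b /\ y \in b).

Definition nontrivial_PBD (T : finType) (B : {set {set T}}) : Prop :=
  is_PBD B /\ [set: T] \notin B.

Definition near_pencil (T : finType) (B : {set {set T}}) : Prop :=
  exists2 b0, b0 \in B & #|b0| = #|T| - 1 /\
    (forall b, b \in B -> b != b0 -> #|b| = 2).

(* Main.v *)
Require Import Defs.
From mathcomp Require Import all_boot.
From mathcomp Require Import zify.
Set Implicit Arguments. Unset Strict Implicit. Unset Printing Implicit Defensive.

Definition blk (T : finType) (B : {set {set T}}) (x y : T) : {set T} :=
  odflt set0 [pick b in B | (x \in b) && (y \in b)].

Definition rr (T : finType) (B : {set {set T}}) (x : T) := #|[set b in B | x \in b]|.

Lemma blkP (T : finType) (B : {set {set T}}) x y : is_PBD B -> x != y ->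
  [/\ blk B x y \in B, x \in blk B x y & y \in blk B x y].
Proof.
move=> [_ H] xy; have [b [[bB [xb yb]] _]] := H x y xy.
rewrite /blk; case: pickP => [b' /andP[] -> /andP[] -> -> //|/(_ b)].
by rewrite bB xb yb.
Qed.

Lemma uniqB (T : finType) (B : {set {set T}}) x y b1 b2 : is_PBD B -> x != y ->
  b1 \in B -> b2 \in B -> x \in b1 -> y \in b1 -> x \in b2 -> y \in b2 -> b1 = b2.
Proof.
move=> [_ H] xy B1 B2 x1 y1 x2 y2; have [b [_ U]] := H x y xy.
by rewrite -(U b1) // -(U b2).
Qed.

Lemma dc (T : finType) (B : {set {set T}}) :
  \sum_(b in B) #|b| = \sum_x rr B x.
Proof.
under eq_bigr do rewrite -sum1_card.
rewrite (exchange_big_dep xpredT) //=; apply: eq_bigr => x _.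
by rewrite sum1dep_card /rr.
Qed.

Lemma split_sum (T : finType) (A : {set T}) (f : T -> nat) :
  \sum_x f x = \sum_(x in A) f x + \sum_(x in ~: A) f x.
Proof.
rewrite (bigID (mem A)) /=; congr (_ + _); apply: eq_bigl => x; by rewrite inE.
Qed.

Lemma sum_ge (T : finType) (A : {set T}) (f : T -> nat) c :
  (forall x, x \in A -> c <= f x) -> #|A| * c <= \sum_(x in A) f x.
Proof. by move=> H; rewrite -sum_nat_const; apply: leq_sum. Qed.

Lemma sum_le (T : finType) (A : {set T}) (f : T -> nat) c :
  (forall x, x \in A -> f x <= c) -> \sum_(x in A) f x <= #|A| * c.
Proof. by move=> H; rewrite -sum_nat_const; apply: leq_sum. Qed.

Lemma sum_gt (T : finType) (A : {set T}) (f : T -> nat) c y : y \in A -> c < f y ->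
  (forall x, x \in A -> c <= f x) -> #|A| * c < \sum_(x in A) f x.
Proof.
move=> yA cy H; rewrite (big_setD1 _ yA) /= (cardsD1 y) yA.
have : #|A :\ y| * c <= \sum_(i in A :\ y) f i.
  by apply: sum_ge => x; rewrite inE => /andP[_ /H].
lia.
Qed.

Lemma card3 (T : finType) (a b c : T) : a != b -> a != c -> b != c -> #|[set a; b; c]| = 3.
Proof.
move=> ab ac bc; rewrite -setUA cardsU1 cards2 bc !inE negb_or ab ac.
done.
Qed.

Lemma r_out (T : finType) (B : {set {set T}}) b0 x : is_PBD B -> b0 \in B -> x \notin b0 ->
  #|b0| <= rr B x.
Proof.
move=> HP b0B xb0.
have ne : forall y, y \in b0 -> x != y by move=> y yb; apply: contraNneq xb0 => ->.
rewrite -(card_in_imset (f := blk B x)).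
  apply: subset_leq_card; apply/subsetP => _ /imsetP[y yb ->].
  by have [? ? ?] := blkP HP (ne y yb); rewrite inE; apply/andP.
move=> y1 y2 y1b y2b E; apply/eqP; apply: contraNT xb0 => y12.
have [B1 x1 yy1] := blkP HP (ne _ y1b); have [_ _ yy2] := blkP HP (ne _ y2b).
rewrite -E in yy2.
by rewrite (uniqB HP y12 b0B B1 y1b y2b yy1 yy2).
Qed.

Lemma r_in2 (T : finType) (B : {set {set T}}) b0 x y : is_PBD B -> b0 \in B -> x \notin b0 ->
  y \in b0 -> 2 <= rr B y.
Proof.
move=> HP b0B xb0 yb0.
have xy : x != y by apply: contraNneq xb0 => ->.
have [B1 x1 y1] := blkP HP xy.
have ne : b0 != blk B x y by apply: contraNneq xb0 => ->.
have <- : #|[set b0; blk B x y]| = 2 by rewrite cards2 ne.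
apply: subset_leq_card.
apply/subsetP => b; rewrite !inE => /orP[] /eqP ->; apply/andP; split => //.
Qed.

Lemma r_in3 (T : finType) (B : {set {set T}}) b0 x1 x2 : is_PBD B -> b0 \in B ->
  x1 \notin b0 -> x2 \notin b0 -> x1 != x2 -> 1 < #|b0| ->
  exists2 y, y \in b0 & 3 <= rr B y.
Proof.
move=> HP b0B x1b x2b x12 /card_gt1P [u [v [ub vb uv]]].
have [LB xL1 xL2] := blkP HP x12; set L := blk B x1 x2 in LB xL1 xL2.
case: (pickP [pred y in b0 | y \notin L]) => [y /andP[yb0 yL] | none]; last first.
  have uL : u \in L by move: (none u) => /= /negbT; rewrite ub /= negbK.
  have vL : v \in L by move: (none v) => /= /negbT; rewrite vb /= negbK.
  by move: x1b; rewrite (uniqB HP uv b0B LB ub vb uL vL) xL1.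
exists y => //.
have n1 : x1 != y by apply: contraNneq x1b => ->.
have n2 : x2 != y by apply: contraNneq x2b => ->.
have [B1 a1 c1] := blkP HP n1; have [B2 a2 c2] := blkP HP n2.
have d1 : b0 != blk B x1 y by apply: contraNneq x1b => ->.
have d2 : b0 != blk B x2 y by apply: contraNneq x2b => ->.
have d3 : blk B x1 y != blk B x2 y.
  apply: contraNneq yL => E; rewrite -E in a2.
  by rewrite -(uniqB HP x12 B1 LB a1 a2 xL1 xL2).
rewrite -(card3 d1 d2 d3); apply: subset_leq_card.
by apply/subsetP => b; rewrite !inE => /orP[/orP[]|] /eqP ->; apply/andP; split.
Qed.

Lemma r_k2 (T : finType) (B : {set {set T}}) x : is_PBD B ->
  (forall b, b \in B -> #|b| <= 2) -> #|T|.-1 <= rr B x.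
Proof.
move=> HP H2.
have ne : forall y, y \in [set~ x] -> x != y by move=> y; rewrite !inE eq_sym.
rewrite -(cardsC1 x) -(card_in_imset (f := blk B x)).
  apply: subset_leq_card; apply/subsetP => _ /imsetP[y yb ->].
  by have [? ? ?] := blkP HP (ne y yb); rewrite inE; apply/andP.
move=> y1 y2 y1b y2b E; apply/eqP; apply: contraT => y12.
have [B1 x1 yy1] := blkP HP (ne _ y1b); have [_ _ yy2] := blkP HP (ne _ y2b).
rewrite -E in yy2.
have : #|[set x; y1; y2]| <= #|blk B x y1|.
  by apply: subset_leq_card; apply/subsetP => z; rewrite !inE => /orP[/orP[]|] /eqP ->.
have := H2 _ B1; rewrite card3 // ?ne ?y1b ?y2b //.
lia.
Qed.

Lemma not_full (T : finType) (B : {set {set T}}) b : nontrivial_PBD B -> b \in B -> #|b| < #|T|.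
Proof.
move=> [_ nt] bB; rewrite ltn_neqAle max_card andbT; apply: contraNneq nt => E.
suff -> : [set: T] = b by [].
by apply/eqP; rewrite eq_sym eqEcard subsetT /= cardsT E.
Qed.

Lemma np_m1 (T : finType) (B : {set {set T}}) b0 : is_PBD B -> b0 \in B ->
  #|b0| = #|T| - 1 -> 3 <= #|T| ->
  near_pencil B /\ \sum_(b in B) #|b| <= 3 * #|T| - 3.
Proof.
move=> HP b0B k1 n3.
have : #|~: b0| == 1 by apply/eqP; have := cardsC b0; lia.
case/cards1P => x Cx.
have xb0 : x \notin b0 by rewrite -in_setC Cx set11.
have inb0 : forall z, z != x -> z \in b0.
  by move=> z zx; apply: contraNT zx; rewrite -in_setC Cx inE.
have two : forall b, b \in B -> b != b0 -> #|b| = 2.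
  move=> b bB bb0; apply/eqP; rewrite eqn_leq HP.1 // andbT; rewrite leqNgt; apply/negP => b3.
  have : #|b :\: b0| <= 1.
    by rewrite -(cards1 x) -Cx; apply: subset_leq_card; apply/subsetP => z; rewrite !inE => /andP[].
  have := cardsID b0 b => H1 H2.
  have : 1 < #|b :&: b0| by lia.
  case/card_gt1P => [p [q [] ]]; rewrite !inE => /andP[pb pb0] /andP[qb qb0] pq.
  by move: bb0; rewrite (uniqB HP pq bB b0B pb qb pb0 qb0) eqxx.
split; first by exists b0 => //; split.
have Bs : B :\ b0 = [set b in B | x \in b].
  apply/setP => b; rewrite !inE; case bB: (b \in B); rewrite ?andbF //= andbT.
  case xb: (x \in b).
    by apply: contraNneq xb0 => <-.
  have [//|bb0] := eqVneq b b0; exfalso.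
  have : 1 < #|b| by rewrite two.
  case/card_gt1P => [p [q [pb qb pq]]].
  have pb0 : p \in b0 by apply: inb0; apply: contraNneq (negbT xb) => <-.
  have qb0 : q \in b0 by apply: inb0; apply: contraNneq (negbT xb) => <-.
  by move: bb0; rewrite (uniqB HP pq bB b0B pb qb pb0 qb0) eqxx.
have S1 : \sum_(b in B) #|b| = #|b0| + rr B x * 2.
  rewrite (big_setD1 _ b0B) /=; congr (_ + _).
  rewrite /rr -Bs -sum_nat_const; apply: eq_bigr => b; rewrite inE => /andP[bb0 bB].
  by rewrite two //; move: bb0; rewrite inE.
have S2 : \sum_(b in B) #|b| <= rr B x + #|b0| * 2.
  rewrite dc (split_sum b0) Cx big_set1 addnC leq_add2l.
  apply: sum_le => y yb0.
  have xy : x != y by apply: contraNneq xb0 => ->.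
  have [B1 x1 y1] := blkP HP xy.
  apply: (leq_trans (n := #|[set b0; blk B x y]|)); last by rewrite cards2; case: (_ != _).
  apply: subset_leq_card; apply/subsetP => b; rewrite !inE => /andP[bB yb].
  case: eqP => //= /eqP bb0.
  have : b \in B :\ b0 by rewrite !inE bb0 bB.
  rewrite Bs inE => /andP[_ xb].
  by rewrite (uniqB HP xy bB B1 xb yb x1 y1).
lia.
Qed.

Theorem mainTheorem1 (T : finType) (B : {set {set T}}) :
  nontrivial_PBD B -> 3 <= #|T| ->
  3 * #|T| - 3 <= \sum_(b in B) #|b| /\
  (\sum_(b in B) #|b| = 3 * #|T| - 3 <-> near_pencil B).
Proof.
move=> NT n3; have HP := NT.1.
have [u [v [_ _ uv]]] : exists u v, [/\ u \in [set: T], v \in [set: T] & u != v].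
  by apply/card_gt1P; rewrite cardsT; lia.
have [bu _ _] := blkP HP uv.
have B0 : 0 < #|B| by apply/card_gt0P; exists (blk B u v).
have [b0 b0B Hmax] := eq_bigmax_cond (fun b : {set T} => #|b|) B0.
have kmax : forall b, b \in B -> #|b| <= #|b0|.
  move=> b bB; rewrite -Hmax; exact: (@leq_bigmax_cond _ (mem B) (fun b : {set T} => #|b|)).
have k2 : 2 <= #|b0| := NT.1.1 _ b0B.
have kn : #|b0| < #|T| := not_full NT b0B.
have Cc := cardsC b0.
have Sdc := dc B.
have rev : near_pencil B -> \sum_(b in B) #|b| <= 3 * #|T| - 3.
  by case=> b1 b1B [k1 _]; have [_ ->] := np_m1 HP b1B k1 n3.
have [kk2|k3] := leqP #|b0| 2.
  have all2 : forall b, b \in B -> #|b| <= 2 by move=> b /kmax; lia.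
  have L : #|T| * #|T|.-1 <= \sum_(b in B) #|b|.
    rewrite Sdc (split_sum setT) setCT big_set0 addn0 -cardsT.
    by apply: sum_ge => x _; rewrite cardsT; apply: r_k2.
  have H3 : 3 * #|T|.-1 <= #|T| * #|T|.-1 by rewrite leq_mul2r n3 orbT.
  rewrite -subn1 in L H3.
  split; first by lia.
  split=> [E|/rev]; last by lia.
  have n3' : #|T| = 3.
    case: (ltnP 3 #|T|) => [n4|]; last by lia.
    have H4 : 4 * (#|T| - 1) <= #|T| * (#|T| - 1) by rewrite leq_mul2r n4 orbT.
    lia.
  exists b0 => //; split; first by lia.
  by move=> b bB _; apply/eqP; rewrite eqn_leq all2 // HP.1.
have [x xb0] : exists x, x \in ~: b0 by apply/card_gt0P; lia.
rewrite inE in xb0.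
have L : #|b0| * 2 + #|~: b0| * #|b0| <= \sum_(b in B) #|b|.
  rewrite Sdc (split_sum b0); apply: leq_add.
    by apply: sum_ge => y yb; apply: (r_in2 HP b0B xb0).
  by apply: sum_ge => z; rewrite inE => zb; apply: r_out.
have L2 : 1 < #|~: b0| -> #|b0| * 2 + #|~: b0| * #|b0| < \sum_(b in B) #|b|.
  case/card_gt1P => [x1 [x2 []]]; rewrite !inE => x1b x2b x12.
  have [y yb y3] := r_in3 HP b0B x1b x2b x12 (ltnW k3).
  rewrite Sdc (split_sum b0); rewrite -addSn; apply: leq_add.
    apply: sum_gt yb y3 _ => w wb; apply: (r_in2 HP b0B xb0 wb).
  by apply: sum_ge => z; rewrite inE => zb; apply: r_out.
have LB : 3 * #|T| - 3 <= \sum_(b in B) #|b| by nia.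
split => //.
split=> [E|/rev]; last by lia.
have m1 : #|~: b0| = 1.
  case: (ltnP 1 #|~: b0|) => [/L2|]; first by nia.
  have : 0 < #|~: b0| by apply/card_gt0P; exists x; rewrite inE.
  lia.
by have [] := np_m1 HP b0B (ltac:(lia)) n3.
Qed.
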